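(* Let $\lambda_0\ge0$ be the BS intensity of a buyer MNO-0 and $\lambda_i>0$, $i\in\mathcal N$, those of the sellers it buys from, $\lambda=\lambda_0+\sum_{i\in\mathcal N}\lambda_i$, $w_i=\lambda_i/\lambda$, $\bar\lambda=\sum_{i\in\mathcal N\cup\{0\}}w_i\lambda_i$, $\beta'=1+\bar\lambda(\beta-1)/\lambda$, $\theta=\frac{\alpha}{2\pi}\frac{B^{2/\alpha}}{\Gamma(2/\alpha)}$ with $B=T\sigma^2/p$, and let the approximate coverage probability be $$\widetilde P_c=\Big[1+\frac{\bar\lambda(\beta-1)}{\lambda}+\frac{\theta}{\lambda}\Big]^{-1}.$$ Let $0<\epsilon<1$ with $1-\epsilon>1/\beta'$. If the QoS condition $\widetilde P_c\ge1-\epsilon$ holds, then $$\sum_{i\in\mathcal N\cup\{0\}}\Big(1-\frac{w_i(\beta-1)(1-\epsilon)}{\epsilon}\Big)\lambda_i\ge\frac{\theta(1-\epsilon)}{\epsilon}.$$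
   Context: This is the model where interference and association are decoupled: users associate with the nearest BS among intensity $\lambda$, while interfering BSs have intensity $\bar\lambda$. Parameters: $\alpha>2$ path-loss exponent, $T>0$ SINR threshold, $\sigma^2>0$ noise variance, $p>0$ transmit power, $\beta>0$ interference constant (for Rayleigh interfering links $\beta=1+\rho(T,\alpha)$, $\rho(T,\alpha)=T^{2/\alpha}\int_{T^{-2/\alpha}}^\infty(1+u^{\alpha/2})^{-1}du$). $\Gamma$ is the Gamma function. *)

(* Defs.v *)
From Stdlib Require Import Reals.
From Coquelicot Require Import Coquelicot.
Open Scope R_scope.

Definition Gamma (s : R) : R :=
  RInt_gen (fun t => Rpower t (s - 1) * exp (- t)) (at_right 0) (Rbar_locally p_infty).

Definition theta (alpha T sigma2 p : R) : R :=
  alpha / (2 * PI) * Rpower (T * sigma2 / p) (2 / alpha) / Gamma (2 / alpha).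

(* Buyer is index 0, sellers are indices 1..n; lam i is the BS intensity of MNO-i. *)
Definition lam_tot (lam : nat -> R) (n : nat) : R := sum_n lam n.
Definition wgt (lam : nat -> R) (n : nat) (i : nat) : R := lam i / lam_tot lam n.
Definition lam_bar (lam : nat -> R) (n : nat) : R := sum_n (fun i => wgt lam n i * lam i) n.
Definition beta' (lam : nat -> R) (n : nat) (beta : R) : R :=
  1 + lam_bar lam n * (beta - 1) / lam_tot lam n.
Definition Pc_approx (lam : nat -> R) (n : nat) (beta th : R) : R :=
  / (1 + lam_bar lam n * (beta - 1) / lam_tot lam n + th / lam_tot lam n).

(* Main.v *)
Require Import Defs.
From Stdlib Require Import Reals Lra.
From Coquelicot Require Import Coquelicot.
Open Scope R_scope.

Theorem proposition12 (alpha T sigma2 p beta eps : R) (n : nat) (lam : nat -> R) :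
  2 < alpha -> 0 < T -> 0 < sigma2 -> 0 < p -> 0 < beta ->
  0 <= lam 0%nat ->
  (forall i : nat, (1 <= i <= n)%nat -> 0 < lam i) ->
  0 < lam_tot lam n ->
  0 < eps < 1 ->
  1 - eps > / beta' lam n beta ->
  Pc_approx lam n beta (theta alpha T sigma2 p) >= 1 - eps ->
  sum_n (fun i => (1 - wgt lam n i * (beta - 1) * (1 - eps) / eps) * lam i) n
    >= theta alpha T sigma2 p * (1 - eps) / eps.
Proof.
  intros _ _ _ _ _ _ _ HL He _ HP.
  set (c := (beta - 1) * (1 - eps) / eps).
  assert (Hs : sum_n (fun i => (1 - wgt lam n i * (beta - 1) * (1 - eps) / eps) * lam i) n
     = lam_tot lam n + (- c) * lam_bar lam n).
  { unfold lam_tot, lam_bar.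
    rewrite <- (sum_n_mult_l (K:=R_Ring)). rewrite <- (sum_n_plus (G:=R_AbelianMonoid)).
    apply sum_n_ext. intros k. unfold plus, mult; simpl. unfold c. field. lra. }
  rewrite Hs. clear Hs.
  unfold Pc_approx in HP.
  set (L := lam_tot lam n) in *. set (lb := lam_bar lam n) in *.
  set (th := theta alpha T sigma2 p) in *.
  set (D := 1 + lb * (beta - 1) / L + th / L) in *.
  assert (HD : 0 < D).
  { destruct (Rle_or_lt D 0) as [h|h]; [|exact h].
    destruct (Req_dec D 0) as [h0|h0].
    - rewrite h0, Rinv_0 in HP. lra.
    - assert (/ D < 0) by (apply Rinv_lt_0_compat; lra). lra. }
  assert (H1 : 1 >= (1 - eps) * D).
  { apply Rmult_ge_compat_r with (r := D) in HP; [|lra].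
    rewrite Rinv_l in HP by lra. lra. }
  assert (H2 : eps * L >= (1 - eps) * (lb * (beta - 1) + th)).
  {
    replace ((1 - eps) * (lb * (beta - 1) + th)) with (((1 - eps) * D) * L - (1-eps)*L)
      by (unfold D; field; lra).
    assert (1 * L >= (1 - eps) * D * L) by (apply Rmult_ge_compat_r; lra).
    ring_simplify in H. ring_simplify. lra. }
  unfold c.
  apply Rle_ge, (Rmult_le_reg_r eps); [lra|].
  replace ((L + - ((beta - 1) * (1 - eps) / eps) * lb) * eps)
    with (eps * L - (beta - 1) * (1 - eps) * lb) by (field; lra).
  replace (th * (1 - eps) / eps * eps) with (th * (1 - eps)) by (field; lra).
  nra.
Qed.
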